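(* Let $p$ be a prime and $n$ a positive integer with $p<n$. Then $$\mathcal{Q}_n=\mathcal{M}^n+\big(q_{n,p}G_p(X),\,q_{n,p+1}G_{p+1}(X),\dots,q_{n,n-1}G_{n-1}(X)\big),$$ where for $k=p,\dots,n-1$ the integer $q_{n,k}$ is $p^{\,n-v_p((pk)!)}$ if $v_p((pk)!)<n$ and $1$ otherwise. In particular $\mathcal{M}^n$ is strictly contained in $\mathcal{Q}_n$.
   Context: Fix a prime $p$ and $n\geq1$. $\mathcal{M}=(p,X)\subseteq\mathbb{Z}[X]$ and $\mathcal{Q}_n=\bigcap_{i\in\{0,\dots,p^n-1\},\ p\mid i}(p^n,X-i)$, i.e. the set of $f\in\mathbb{Z}[X]$ with $p^n\mid f(i)$ for every integer $i$ divisible by $p$. For $k\geq1$, $G_k(X)=\prod_{h=0}^{k-1}(X-hp)$, and $G_0(X)=1$. $v_p$ is the $p$-adic valuation. *)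

(* Defs.v *)
From HB Require Import structures.
From mathcomp Require Import all_boot all_order all_algebra.
Set Implicit Arguments. Unset Strict Implicit. Unset Printing Implicit Defensive.
Import Order.TTheory GRing.Theory Num.Theory.
Local Open Scope ring_scope.

Definition Gpoly (p k : nat) : {poly int} :=
  \prod_(h < k) ('X - ((h * p)%N%:Z)%:P).

Definition qnk (p n k : nat) : int :=
  if (logn p (p * k)`! < n)%N then ((p ^ (n - logn p (p * k)`!))%N)%:Z else 1.

(* Q_n = intersection over i in {0..p^n-1}, p | i, of (p^n, X - i):
   f in (p^n, X - i) iff p^n | f(i). *)
Definition inQ (p n : nat) (f : {poly int}) : Prop :=
  forall i : nat, (i < p ^ n)%N -> (p %| i)%N -> ((p ^ n)%N%:Z %| f.[i%:Z])%Z.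

(* M^n, M = (p, X): generated by the products of n generators, i.e. by
   p^(n-j) X^j, j = 0..n. *)
Definition inMpow (p n : nat) (f : {poly int}) : Prop :=
  exists c : nat -> {poly int},
    f = \sum_(j < n.+1) c j * (((p ^ (n - j))%N%:Z)%:P * 'X^j).

Definition inMpowPlus (p n : nat) (f : {poly int}) : Prop :=
  exists (c d : nat -> {poly int}),
    f = \sum_(j < n.+1) c j * (((p ^ (n - j))%N%:Z)%:P * 'X^j)
        + \sum_(p <= k < n) d k * ((qnk p n k)%:P * Gpoly p k).

(* Main.v *)
Require Import Defs.
From HB Require Import structures.
From mathcomp Require Import all_boot all_order all_algebra.
From mathcomp Require Import zify ring.
Import Order.TTheory GRing.Theory Num.Theory.
Local Open Scope ring_scope.

Lemma sum_ext_div p k N : (1 < p)%N -> (k <= N)%N ->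
  (\sum_(1 <= i < N.+1) k %/ p ^ i = \sum_(1 <= i < k.+1) k %/ p ^ i)%N.
Proof.
move=> p1 kN.
rewrite (big_cat_nat _ (n:=k.+1)) //= [X in (_ + X)%N]big1_seq ?addn0 // => i /andP[_].
rewrite mem_index_iota => /andP[ki _]; apply: divn_small.
apply: leq_trans ki (ltnW (ltn_expl _ p1)).
Qed.

Lemma logn_fact_mul p k : prime p ->
  logn p (p * k)`! = (k + logn p k`!)%N.
Proof.
move=> pp; have p1 := prime_gt1 pp; have p0 := ltnW p1.
rewrite !logn_fact //.
case: k => [|k]; first by rewrite muln0 big_geq.
rewrite big_add1 /=.
under eq_bigr => i _ do rewrite expnS divnMl //.
have -> : (p * k.+1 = (p * k.+1).-1.+1)%N by rewrite prednK // muln_gt0 p0.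
rewrite big_nat_recl // expn0 divn1; congr (_ + _)%N.
have e : forall M (F : nat -> nat), (\sum_(0 <= i < M) F i.+1 = \sum_(1 <= i < M.+1) F i)%N.
  by move=> M F; rewrite big_add1.
rewrite (e _ (fun i => (k.+1 %/ p ^ i)%N)) sum_ext_div //.
rewrite -ltnS prednK ?muln_gt0 ?p0 //.
by rewrite -[X in (X < _)%N]mul1n ltn_mul2r.
Qed.

Lemma logn_fact_small p k : prime p -> (k < p)%N -> logn p k`! = 0%N.
Proof.
move=> pp kp; rewrite logn_fact // big1_seq // => i /andP[_].
rewrite mem_index_iota => /andP[i1 _]; apply: divn_small.
apply: leq_trans kp _; rewrite -{1}(expn1 p) leq_exp2l //; exact: prime_gt1.
Qed.

Lemma logn_pk p k : prime p -> logn p (p ^ k * k`!) = logn p (p * k)`!.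
Proof.
move=> pp; rewrite lognM ?fact_gt0 ?expn_gt0 ?prime_gt0 //.
by rewrite pfactorK // logn_fact_mul.
Qed.

Lemma dvdPow p a b : (a <= b)%N -> ((p ^ a)%N%:Z %| (p ^ b)%N%:Z)%Z.
Proof. by move=> ab; rewrite dvdzE /= dvdn_exp2l. Qed.

Lemma PoszMn a b : ((a * b)%N%:Z = a%:Z * b%:Z). Proof. by rewrite PoszM. Qed.

Lemma G_coef p k j : ((p ^ (k - j))%N%:Z %| (Gpoly p k)`_j)%Z.
Proof.
elim: k j => [|k IH] j.
  by rewrite /Gpoly big_ord0 coefC; case: j => [|j] //=; rewrite dvdz0.
rewrite /Gpoly big_ord_recr /= -/(Gpoly p k) mulrBr coefB coefMX coefMC.
apply: rpredB.
  case: j => [|j] /=; first by rewrite dvdz0.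
  by rewrite subSS IH.
apply: (@dvdz_trans ((p ^ (k - j) * p)%N%:Z)).
  by rewrite -expnSr; apply: dvdPow; lia.
rewrite !PoszM; apply: dvdz_mul => //; exact: dvdz_mull.
Qed.

Section S.
Variables (p n : nat).
Hypothesis pp : prime p.

Definition Mc (f : {poly int}) := forall j : nat, ((p ^ (n - j))%N%:Z %| f`_j)%Z.

Lemma Mc0 : Mc 0. Proof. by move=> j; rewrite coef0 dvdz0. Qed.
Lemma McD f g : Mc f -> Mc g -> Mc (f + g).
Proof. by move=> hf hg j; rewrite coefD rpredD. Qed.
Lemma McN f : Mc f -> Mc (- f).
Proof. by move=> hf j; rewrite coefN rpredN. Qed.
Lemma McB f g : Mc f -> Mc g -> Mc (f - g).
Proof. by move=> hf hg; apply: McD => //; apply: McN. Qed.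
Lemma McM f g : Mc g -> Mc (f * g).
Proof.
move=> hg j; rewrite coefM; apply: rpred_sum => i _.
apply: dvdz_mull; apply: dvdz_trans (hg _); apply: dvdPow.
have := ltn_ord i; lia.
Qed.
Lemma Mc_sum (I : Type) (r : seq I) (P : pred I) (F : I -> {poly int}) :
  (forall i, P i -> Mc (F i)) -> Mc (\sum_(i <- r | P i) F i).
Proof.
move=> h; elim/big_ind: _ => //; [exact: Mc0 | exact: McD].
Qed.

Lemma Mc_Gbig k : (n <= k)%N -> Mc (Gpoly p k).
Proof. by move=> nk j; apply: dvdz_trans (G_coef p k j); apply: dvdPow; lia. Qed.

Lemma Mc_pG k : (k <= n)%N -> Mc ((p ^ (n - k))%N%:Z%:P * Gpoly p k).
Proof.
move=> kn j; rewrite coefCM.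
apply: (@dvdz_trans ((p ^ (n - k) * p ^ (k - j))%N%:Z)).
  by rewrite -expnD; apply: dvdPow; lia.
by rewrite PoszM; apply: dvdz_mul => //; apply: G_coef.
Qed.

Lemma Mc_mon j : Mc ((p ^ (n - j))%N%:Z%:P * 'X^j).
Proof.
move=> i; rewrite coefCM coefXn; case: eqP => [->|_]; first by rewrite mulr1.
by rewrite mulr0 dvdz0.
Qed.

Lemma Mc_of_Mpow f : inMpow p n f -> Mc f.
Proof.
case=> c ->; apply: Mc_sum => j _; apply: McM; exact: Mc_mon.
Qed.

Lemma Mpow_of_Mc f : Mc f -> inMpow p n f.
Proof.
move=> hf.
exists (fun j => if (j < n)%N then ((f`_j %/ (p ^ (n - j))%N%:Z)%Z)%:P else drop_poly n f).
rewrite big_ord_recr /= ltnn subnn expn0 mul1r.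
rewrite -[f in LHS](poly_take_drop n); congr (_ + _).
rewrite /take_poly poly_def; apply: eq_bigr => i _ /=.
rewrite (ltn_ord i) mulrA -polyCM divzK // mul_polyC //.
Qed.

End S.

Lemma G_eval p k m :
  (Gpoly p k).[(m * p)%N%:Z] = (p ^ k * m ^_ k)%N%:Z.
Proof.
elim: k => [|k IH].
  by rewrite /Gpoly big_ord0 hornerC ffactn0 expn0.
rewrite /Gpoly big_ord_recr /= -/(Gpoly p k) hornerM hornerXsubC IH ffactnSr.
case: (leqP k m) => km.
  rewrite subzn ?leq_mul2r ?km ?orbT // -PoszM; congr Posz.
  rewrite -mulnBl expnSr; ring.
by rewrite (ffact_small km) !(muln0, mul0n) -[Posz 0]/(0:int) mul0r.
Qed.

Section S.
Variables (p n : nat).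
Hypothesis pp : prime p.

Local Notation Q := (inQ p n).

Lemma Q0 : Q 0. Proof. by move=> i _ _; rewrite horner0 dvdz0. Qed.
Lemma QD f g : Q f -> Q g -> Q (f + g).
Proof. by move=> hf hg i h1 h2; rewrite hornerD rpredD ?hf ?hg. Qed.
Lemma QN f : Q f -> Q (- f).
Proof. by move=> hf i h1 h2; rewrite hornerN rpredN hf. Qed.
Lemma QB f g : Q f -> Q g -> Q (f - g).
Proof. by move=> hf hg; apply: QD => //; apply: QN. Qed.
Lemma QM f g : Q g -> Q (f * g).
Proof. by move=> hg i h1 h2; rewrite hornerM dvdz_mull ?hg. Qed.
Lemma Q_sum (I : Type) (r : seq I) (P : pred I) (F : I -> {poly int}) :
  (forall i, P i -> Q (F i)) -> Q (\sum_(i <- r | P i) F i).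
Proof. move=> h; elim/big_ind: _ => //; [exact: Q0 | exact: QD]. Qed.

Lemma Mc_Q f : Mc p n f -> Q f.
Proof.
move=> hf i _ /divnK ei; rewrite horner_coef; apply: rpred_sum => j _.
apply: (@dvdz_trans ((p ^ (n - j) * p ^ j)%N%:Z)).
  by rewrite -expnD; apply: dvdPow; lia.
rewrite PoszM; apply: dvdz_mul; first exact: hf.
by rewrite dvdzE abszX /= dvdn_exp2r // -ei dvdn_mull.
Qed.

Lemma qN k : ((p ^ n)%N%:Z %| qnk p n k * (p ^ k * k`!)%N%:Z)%Z.
Proof.
have hv := pfactor_dvdnn p (p ^ k * k`!); rewrite logn_pk // in hv.
rewrite /qnk; case: ifP => hvn.
  rewrite -PoszM dvdzE /=.
  rewrite -{1}(subnK (ltnW hvn)) expnD; exact: dvdn_mul.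
rewrite mul1r dvdzE /=; apply: dvdn_trans hv; apply: dvdn_exp2l.
by rewrite leqNgt hvn.
Qed.

Lemma T_Q k : Q ((qnk p n k)%:P * Gpoly p k).
Proof.
move=> i _ /divnK ei; rewrite hornerCM -ei G_eval -bin_ffact (mulnC 'C(_, _)) mulnA PoszM mulrA.
exact: dvdz_mulr (qN k).
Qed.

Lemma exact_dvd c k : ((p ^ n)%N%:Z %| c * (p ^ k * k`!)%N%:Z)%Z ->
  (logn p (p * k)`! < n)%N -> ((p ^ (n - logn p (p * k)`!))%N%:Z %| c)%Z.
Proof.
rewrite -logn_pk //.
have hN : (0 < p ^ k * k`!)%N by rewrite muln_gt0 expn_gt0 prime_gt0 ?fact_gt0.
have [u cu eN] := pfactor_coprime pp hN.
set v := logn p _ in eN *; rewrite eN => h vn.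
move: h; rewrite dvdzE abszM /= -{1}(subnK (ltnW vn)) expnD mulnA dvdn_pmul2r ?expn_gt0 ?prime_gt0 //.
rewrite Gauss_dvdl // coprimeXl //.
Qed.

End S.

Section S.
Variables (p n : nat).
Hypothesis pp : prime p.
Hypothesis pn : (p < n)%N.

Local Notation T k := ((qnk p n k)%:P * Gpoly p k).
Definition Ic f := exists d : nat -> {poly int},
   Mc p n (f - \sum_(p <= k < n) d k * T k).

Lemma Ic_Q f : Ic f -> inQ p n f.
Proof.
case=> d h.
have -> : f = (f - \sum_(p <= k < n) d k * T k) + \sum_(p <= k < n) d k * T k
  by rewrite subrK.
apply: QD; first exact: Mc_Q.
apply: Q_sum => k _; apply: QM; exact: T_Q.
Qed.

Lemma Ic_addMc f g : Ic f -> Mc p n g -> Ic (f + g).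
Proof. by case=> d h hg; exists d; rewrite addrAC; exact: McD. Qed.

Lemma Ic_addT f k e : Ic f -> (p <= k < n)%N -> Ic (f + e * T k).
Proof.
case=> d h /andP[pk kn].
exists (fun j => d j + (if j == k then e else 0)).
have -> : \sum_(p <= j < n) (d j + (if j == k then e else 0)) * T j
   = \sum_(p <= j < n) d j * T j + e * T k.
  under eq_bigr => j _ do rewrite mulrDl.
  rewrite big_split /=; congr (_ + _).
  rewrite (big_cat_nat (n:=k)) ?(ltnW kn) //= [X in _ + X]big_ltn // eqxx.
  rewrite big1_seq ?add0r; last first.
    move=> j /andP[_]; rewrite mem_index_iota => /andP[h1 h2].
    case: eqP => [ej|_]; last by rewrite mul0r.
    by exfalso; lia.
  rewrite big1_seq ?addr0 //.
  move=> j /andP[_]; rewrite mem_index_iota => /andP[h1 h2].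
  case: eqP => [ej|_]; last by rewrite mul0r.
  by exfalso; lia.
set S := \sum_(p <= j < n) d j * T j.
have -> : f + e * T k - (S + e * T k) = f - S by ring.
exact: h.
Qed.

Lemma induct k : (k <= n)%N -> forall f, inQ p n f ->
  exists g, Ic (f - Gpoly p k * g).
Proof.
elim: k => [|k IH] kn f hf.
  exists f; rewrite /Gpoly big_ord0 mul1r subrr; exists (fun _ => 0).
  rewrite big1 => [|j _]; last exact: mul0r.
  rewrite subrr; exact: Mc0.
have [g hg] := IH (ltnW kn) f hf.
set a := (k * p)%N%:Z; set c := g.[a].
have : root (g - c%:P) a by rewrite rootE hornerD hornerN hornerC subrr.
move/factor_theorem => [g' eg']; exists g'.
have e2 : g = g' * ('X - a%:P) + c%:P by rewrite -eg' subrK.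
have -> : f - Gpoly p k.+1 * g' = (f - Gpoly p k * g) + c%:P * Gpoly p k.
  rewrite /Gpoly big_ord_recr /= -/(Gpoly p k) e2 -/a; ring.
have hQ : inQ p n (Gpoly p k * g).
  have -> : Gpoly p k * g = f - (f - Gpoly p k * g) by ring.
  by apply: QB => //; apply: Ic_Q.
have kpn : (k * p < p ^ n)%N.
  have n1 : n = n.-1.+1 by rewrite prednK //; lia.
  rewrite n1 expnSr ltn_mul2r prime_gt0 //=.
  apply: (@leq_ltn_trans n.-1); [lia | exact: ltn_expl (prime_gt1 pp)].
have hc := hQ _ kpn (dvdn_mull _ (dvdnn p)).
rewrite hornerM G_eval ffactnn -/c mulrC in hc.
case: (ltnP k p) => kp.
  have hv : logn p (p * k)`! = k by rewrite logn_fact_mul // logn_fact_small // addn0.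
  have := @exact_dvd p n pp c k hc; rewrite hv => /(_ kn) hd.
  have -> : c%:P * Gpoly p k
      = (c %/ (p ^ (n - k))%N%:Z)%Z%:P * ((p ^ (n - k))%N%:Z%:P * Gpoly p k)
    by rewrite mulrA -polyCM divzK.
  by apply: Ic_addMc => //; apply: McM => //; apply: Mc_pG => //; apply: ltnW.
have hq : (qnk p n k %| c)%Z.
  rewrite /qnk; case: ifP => h; [exact: exact_dvd | exact: dvd1z].
have -> : c%:P * Gpoly p k = (c %/ qnk p n k)%Z%:P * T k
  by rewrite mulrA -polyCM divzK.
by apply: Ic_addT => //; rewrite kp.
Qed.

Lemma Q_Ic f : inQ p n f -> Ic f.
Proof.
move=> hf; have [g hg] := @induct n (leqnn n) f hf.
have -> : f = (f - Gpoly p n * g) + Gpoly p n * g by rewrite subrK.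
apply: Ic_addMc => //; rewrite mulrC; apply: McM => //; exact: Mc_Gbig.
Qed.

Lemma Ic_plus f : Ic f <-> inMpowPlus p n f.
Proof.
split.
  case=> d h; have [c ec] := @Mpow_of_Mc p n _ h.
  by exists c, d; rewrite -ec subrK.
case=> c [d ->]; exists d; rewrite addrK; apply: Mc_of_Mpow => //; by exists c.
Qed.

Lemma G_top k : (Gpoly p k)`_k = 1.
Proof.
have m := monic_prod_XsubC (index_enum 'I_k) predT (fun h : 'I_k => (h * p)%N%:Z).
have s := size_prod_XsubC (index_enum 'I_k) (fun h : 'I_k => (h * p)%N%:Z).
move: m s; rewrite -/(Gpoly p k) => /monicP; rewrite lead_coefE => <- ->.
have sz : size (index_enum 'I_k) = k by rewrite /index_enum unlock -enumT size_enum_ord.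
by rewrite sz.
Qed.

Lemma strict : exists f, inQ p n f /\ ~ inMpow p n f.
Proof.
exists (T p); split; first exact: T_Q.
move/(@Mc_of_Mpow p n pp _) => /(_ p); rewrite coefCM G_top mulr1.
have hv : logn p (p * p)`! = p.+1.
  have h1 : logn p p`! = 1%N.
    by have := @logn_fact_mul p 1 pp; rewrite muln1 (_ : 1`! = 1%N) // logn1 addn0.
  by rewrite logn_fact_mul // h1 addn1.
rewrite /qnk hv; case: ifP => h; rewrite dvdzE /=.
  by rewrite dvdn_Pexp2l ?prime_gt1 //; lia.
move/(dvdn_leq (ltnSn 0)); have := ltn_expl (n - p) (prime_gt1 pp); lia.
Qed.

End S.

Theorem mainTheorem15 (p n : nat) :
  prime p -> (0 < n)%N -> (p < n)%N ->
  (forall f : {poly int}, inQ p n f <-> inMpowPlus p n f) /\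
  ((forall f : {poly int}, inMpow p n f -> inQ p n f) /\
   exists f : {poly int}, inQ p n f /\ ~ inMpow p n f).
Proof.
move=> pp n0 pn; split.
  move=> f; rewrite -Ic_plus //; split; [exact: Q_Ic | exact: Ic_Q].
split; last exact: strict.
move=> f /(@Mc_of_Mpow p n pp _); exact: Mc_Q.
Qed.
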